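(* Let $A$ be any randomized algorithm which, on input a continuous proper scoring rule $s$ with convex exposure on an $n$-outcome forecast domain $\mathcal{D}$ and expert forecasts $\mathbf{p}_1,\dots,\mathbf{p}_m\in\mathcal{D}$, outputs a weight vector $\mathbf{w}\in\Delta^m$. Fix any such input and let $\hat{\mathbf{w}}=\mathbb{E}_A[\mathbf{w}]$. Then for every $j\in[n]$, \[s(\mathbf{p}^*_{\hat{\mathbf{w}}};j)\ge\mathbb{E}_A\big[s(\mathbf{p}^*_{\mathbf{w}};j)\big],\] where for $\mathbf{x}\in\Delta^m$, $\mathbf{p}^*_{\mathbf{x}}$ denotes the quasi-arithmetic pool of $\mathbf{p}_1,\dots,\mathbf{p}_m$ with weight vector $\mathbf{x}$ with respect to the exposure function of $s$.
   Context: $\Delta^k$ is the standard simplex in $\mathbb{R}^k$. An $n$-outcome forecast domain is a convex $(n-1)$-dimensional subset of $\Delta^n$. A proper scoring rule on $\mathcal{D}$ is $s:\mathcal{D}\times[n]\to\mathbb{R}$ with $\sum_j p(j)s(\mathbf{p};j)\ge\sum_j p(j)s(\mathbf{x};j)$ for all $\mathbf{p},\mathbf{x}\in\mathcal{D}$, equality only if $\mathbf{x}=\mathbf{p}$. $G(\mathbf{p}):=\sum_j p(j)s(\mathbf{p};j)$ is differentiable and strictly convex; the exposure function is $\mathbf{g}=\nabla G$ (values modulo translation by the all-ones vector). Convex exposure: range of $\mathbf{g}$ is convex. The QA pool with weights $\mathbf{x}$ is the unique $\mathbf{p}^*_{\mathbf{x}}\in\mathcal{D}$ with $\mathbf{g}(\mathbf{p}^*_{\mathbf{x}})=\sum_i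 x_i\mathbf{g}(\mathbf{p}_i)$ (modulo the all-ones vector). *)

(* Defs.v *)
From HB Require Import structures.
From mathcomp Require Import all_boot all_order all_algebra.
From mathcomp Require Import all_classical all_reals all_analysis.
Set Implicit Arguments. Unset Strict Implicit. Unset Printing Implicit Defensive.
Import Order.TTheory GRing.Theory Num.Theory.
Local Open Scope classical_set_scope.
Local Open Scope ring_scope.

Section ScoringDefs.
Variable R : realType.

Definition dotv k (a b : 'rV[R]_k) : R := \sum_(j < k) a 0 j * b 0 j.
Definition nrm1 k (v : 'rV[R]_k) : R := \sum_(j < k) `|v 0 j|.
Definition ones k : 'rV[R]_k := const_mx 1.
Arguments ones k : clear implicits.

Definition std_simplex k : set 'rV[R]_k :=
  [set p | (forall j, 0 <= p 0 j) /\ \sum_(j < k) p 0 j = 1].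
Arguments std_simplex k : clear implicits.

Definition convex_set_v k (D : set 'rV[R]_k) : Prop :=
  forall x y, D x -> D y -> forall t : R, 0 <= t <= 1 ->
    D (t *: x + (1 - t) *: y).

(* n-outcome forecast domain: convex, (n-1)-dimensional subset of Delta^n.
   (n-1)-dimensionality: D contains a point p0 and n-1 points q i such that
   the differences q i - p0 are linearly independent. *)
Definition forecast_domain n (D : set 'rV[R]_n) : Prop :=
  [/\ D `<=` std_simplex n, convex_set_v D &
      exists (p0 : 'rV[R]_n) (q : 'I_n.-1 -> 'rV[R]_n),
        [/\ D p0, (forall i, D (q i)) &
            row_free (\matrix_(i < n.-1) (q i - p0))]].

Definition exp_score n (s : 'rV[R]_n -> 'I_n -> R) (p x : 'rV[R]_n) : R :=
  \sum_(j < n) p 0 j * s x j.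

Definition proper_scoring_rule n (D : set 'rV[R]_n)
    (s : 'rV[R]_n -> 'I_n -> R) : Prop :=
  forall p x, D p -> D x ->
    exp_score s p x <= exp_score s p p /\
    (exp_score s p x = exp_score s p p -> x = p).

Definition Gfun n (s : 'rV[R]_n -> 'I_n -> R) (p : 'rV[R]_n) : R :=
  exp_score s p p.

Definition continuous_scoring_rule n (D : set 'rV[R]_n)
    (s : 'rV[R]_n -> 'I_n -> R) : Prop :=
  forall j p, D p -> forall eps : R, 0 < eps -> exists2 delta : R, 0 < delta &
    forall q, D q -> nrm1 (q - p) < delta -> `|s q j - s p j| < eps.

Definition strictly_convex_on n (D : set 'rV[R]_n) (G : 'rV[R]_n -> R) : Prop :=
  forall x y, D x -> D y -> x <> y -> forall t : R, 0 < t < 1 ->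
    G (t *: x + (1 - t) *: y) < t * G x + (1 - t) * G y.

(* g is a gradient of G on D (differentiability relative to D; since D
   spans the hyperplane sum = 1, g(p) is determined modulo the all-ones
   vector). *)
Definition is_gradient_on n (D : set 'rV[R]_n) (G : 'rV[R]_n -> R)
    (g : 'rV[R]_n -> 'rV[R]_n) : Prop :=
  forall p, D p -> forall eps : R, 0 < eps -> exists2 delta : R, 0 < delta &
    forall q, D q -> nrm1 (q - p) < delta ->
      `|G q - G p - dotv (g p) (q - p)| <= eps * nrm1 (q - p).

(* convex exposure: the range of g (modulo translation by the all-ones
   vector) is convex *)
Definition convex_exposure n (D : set 'rV[R]_n) (g : 'rV[R]_n -> 'rV[R]_n) : Prop :=
  forall p q, D p -> D q -> forall t : R, 0 <= t <= 1 ->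
    exists r, D r /\ exists c : R,
      g r = t *: g p + (1 - t) *: g q + c *: ones n.

Definition is_qa_pool n m (D : set 'rV[R]_n) (g : 'rV[R]_n -> 'rV[R]_n)
    (ps : 'I_m -> 'rV[R]_n) (x : 'rV[R]_m) (p : 'rV[R]_n) : Prop :=
  D p /\ exists c : R, g p = \sum_(i < m) x 0 i *: g (ps i) + c *: ones n.

Definition qa_pool n m (D : set 'rV[R]_n) (g : 'rV[R]_n -> 'rV[R]_n)
    (ps : 'I_m -> 'rV[R]_n) (x : 'rV[R]_m) : 'rV[R]_n :=
  xget 0 [set p | is_qa_pool D g ps x p].

End ScoringDefs.
Arguments std_simplex {R} k.
Arguments ones {R} k.

(* Main.v *)
Set Warnings "-all".
Require Import Defs.
From HB Require Import structures.
From mathcomp Require Import all_boot all_order all_algebra.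
From mathcomp Require Import all_classical all_reals all_analysis.
From mathcomp Require Import measurable_realfun.
From mathcomp Require Import zify ring lra.
Set Implicit Arguments. Unset Strict Implicit. Unset Printing Implicit Defensive.
Import Order.TTheory GRing.Theory Num.Theory.
Local Open Scope classical_set_scope.
Local Open Scope ring_scope.
Lemma dotvB (R : realType) k (v a b : 'rV[R]_k) :
  dotv v (a - b) = dotv v a - dotv v b.
Proof.
by rewrite /dotv -sumrB; apply: eq_bigr => i _; rewrite !mxE mulrBr.
Qed.

Lemma span_lemma (R : realType) n (D : set 'rV[R]_n) (p v : 'rV[R]_n) :
  forecast_domain D -> D p ->
  (forall r, D r -> dotv v (r - p) = 0) ->
  exists c : R, v = c *: ones n.
Proof.
move=> [DS _ [p0 [q [Dp0 Dq rf]]]] Dp H.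
case: n D p v DS p0 q Dp0 Dq rf Dp H => [|n] D p v DS p0 q Dp0 Dq rf Dp H.
  by exists 0; apply/rowP => -[].
set M := \matrix_(i < n.+1.-1) (q i - p0).
have hv : (v <= kermx M^T)%MS.
  apply/sub_kermxP; apply/rowP => i.
  have -> : (v *m M^T) 0 i = dotv v (q i - p0).
    by rewrite !mxE; apply: eq_bigr => k _; rewrite !mxE.
  have -> : q i - p0 = (q i - p) - (p0 - p).
    by rewrite opprB addrA subrK.
  by rewrite dotvB (H _ (Dq i)) (H _ Dp0) subrr mxE.
have ho : (ones n.+1 <= kermx M^T)%MS.
  apply/sub_kermxP; apply/rowP => i; rewrite !mxE.
  have [_ s1] := DS _ (Dq i); have [_ s0] := DS _ Dp0.
  transitivity (\sum_(k < n.+1) q i 0 k - \sum_(k < n.+1) p0 0 k).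
    by rewrite -sumrB; apply: eq_bigr => k _; rewrite !mxE mul1r.
  by rewrite s1 s0 subrr.
have o0 : (ones n.+1 : 'rV[R]_n.+1) != 0.
  apply/negP => /eqP /rowP /(_ ord0); rewrite !mxE => /eqP; by rewrite oner_eq0.
have rk : \rank (kermx M^T) = 1%N.
  rewrite mxrank_ker mxrank_tr (eqP rf); lia.
have := mxrank_leqif_sup ho; rewrite rk rank_rV o0 => -[_ hk'].
have hk : (kermx M^T <= ones n.+1)%MS by rewrite -hk'.
have /submxP [C ->] := submx_trans hv hk.
by exists (C 0 0); rewrite [C]mx11_scalar mul_scalar_mx mxE.
Qed.

Lemma common_delta (R : realType) n (D : set 'rV[R]_n) (s : 'rV[R]_n -> 'I_n -> R) p :
  continuous_scoring_rule D s -> D p -> forall e : R, 0 < e ->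
  exists2 dl : R, 0 < dl & forall q, D q -> nrm1 (q - p) < dl ->
     forall k, `|s q k - s p k| < e.
Proof.
move=> hc Dp e e0.
have : forall k : 'I_n, exists dl : R, 0 < dl /\ forall q, D q -> nrm1 (q - p) < dl ->
     `|s q k - s p k| < e.
  by move=> k; have [dl dl0 h] := hc k p Dp e e0; exists dl.
move=> /choice [f hf].
exists (\big[Order.min/1]_(k < n) f k).
  by apply: lt_bigmin => // k _; case: (hf k).
move=> q Dq hq k; apply: (proj2 (hf k)) => //.
by apply: (lt_le_trans hq); apply: bigmin_le.
Qed.

Lemma qtE (R : realType) n (p r : 'rV[R]_n) t :
  t *: r + (1 - t) *: p - p = t *: (r - p).
Proof. by apply/rowP => k; rewrite !mxE; ring. Qed.

Lemma nrm1Z (R : realType) n (d : 'rV[R]_n) t : 0 <= t ->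
  nrm1 (t *: d) = t * nrm1 d.
Proof.
move=> t0; rewrite /nrm1 mulr_sumr; apply: eq_bigr => k _.
by rewrite !mxE normrM ger0_norm.
Qed.

Lemma nrm1_ge0 (R : realType) n (d : 'rV[R]_n) : 0 <= nrm1 d.
Proof. by rewrite /nrm1; apply: sumr_ge0 => k _. Qed.

Lemma dotvZ (R : realType) n (a d : 'rV[R]_n) t :
  dotv a (t *: d) = t * dotv a d.
Proof.
rewrite /dotv mulr_sumr; apply: eq_bigr => k _; by rewrite !mxE mulrCA.
Qed.

Lemma exp_score_qt (R : realType) n (s : 'rV[R]_n -> 'I_n -> R) (p r x : 'rV[R]_n) t :
  exp_score s (t *: r + (1 - t) *: p) x =
  exp_score s p x + t * \sum_k (r - p) 0 k * s x k.
Proof.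
rewrite /exp_score mulr_sumr -big_split; apply: eq_bigr => k _; rewrite !mxE.
move: (r 0 k) (p 0 k) (s x k) => a b c /=; ring.
Qed.

Lemma small_t (R : realType) (N dl : R) : 0 <= N -> 0 < dl ->
  let t := dl / (N + dl + 1) in [/\ 0 < t, t <= 1 & t * N < dl].
Proof.
move=> N0 dl0 t.
have h0 : 0 < N + dl + 1 by lra.
split.
- by rewrite /t divr_gt0.
- by rewrite /t ler_pdivrMr // mul1r; lra.
- rewrite /t mulrAC ltr_pdivrMr //; nra.
Qed.

Lemma sum_bound (R : realType) n (d x y : 'rV[R]_n) (eps : R) :
  (forall k, `|x 0 k - y 0 k| <= eps) ->
  `|\sum_k d 0 k * x 0 k - \sum_k d 0 k * y 0 k| <= nrm1 d * eps.
Proof.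
move=> h; rewrite -sumrB /nrm1 mulr_suml.
apply: (le_trans (ler_norm_sum _ _ _)); apply: ler_sum => k _.
by rewrite -mulrBr normrM ler_wpM2l.
Qed.

Lemma dir_lemma (R : realType) n (D : set 'rV[R]_n) (s : 'rV[R]_n -> 'I_n -> R)
  (g : 'rV[R]_n -> 'rV[R]_n) p r :
  convex_set_v D -> proper_scoring_rule D s -> continuous_scoring_rule D s ->
  is_gradient_on D (Gfun s) g -> D p -> D r ->
  \sum_k (r - p) 0 k * s p k = dotv (g p) (r - p).
Proof.
move=> cD hps hc hg Dp Dr.
set d := r - p; set N := nrm1 d.
set A := \sum_k d 0 k * s p k; set B := dotv (g p) d.
have N0 : 0 <= N by exact: nrm1_ge0.
have Dq : forall t, 0 <= t <= 1 -> D (t *: r + (1 - t) *: p).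
  by move=> t ht; apply: cD.
have key : forall eps, 0 < eps -> exists2 dl, 0 < dl & forall t, 0 < t <= 1 ->
    t * N < dl ->
    `|Gfun s (t *: r + (1 - t) *: p) - Gfun s p - t * B| <= eps * (t * N).
  move=> eps eps0; have [dl dl0 h] := hg p Dp eps eps0.
  exists dl => // t /andP [t0 t1] tN.
  have Dt : D (t *: r + (1 - t) *: p) by apply: Dq; rewrite ltW.
  have := h _ Dt; rewrite qtE nrm1Z; last exact: ltW.
  by rewrite dotvZ -/d -/N -/B => /(_ tN).
apply/eqP; rewrite eq_le; apply/andP; split.
- apply/ler_addgt0Pr => e e0.
  have N1 : 0 < N + 1 by lra.
  set eps := e / (N + 1).
  have eps0 : 0 < eps by rewrite divr_gt0.
  have epsN : eps * (N + 1) = e by rewrite /eps divfK // gt_eqF.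
  have [dl dl0 hdl] := key eps eps0.
  have [t0 t1 tN] := small_t N0 dl0; set t := dl / _ in t0 t1 tN.
  have := hdl t ltac:(by rewrite t0 t1) tN.
  have Dt : D (t *: r + (1 - t) *: p) by apply: Dq; rewrite ltW.
  have := (hps _ _ Dt Dp).1; rewrite exp_score_qt -/d -/A.
  rewrite /Gfun => hp /ler_normlP [_ hG].
  nra.
- apply/ler_addgt0Pr => e e0.
  have N1 : 0 < N + 1 by lra.
  set eps := e / (2 * (N + 1)).
  have eps0 : 0 < eps by rewrite divr_gt0 // mulr_gt0.
  have epsN : eps * (2 * (N + 1)) = e by rewrite /eps divfK // gt_eqF // mulr_gt0.
  have [dl1 dl10 hdl1] := key eps eps0.
  have [dl2 dl20 hdl2] := common_delta hc Dp eps0.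
  have dl0 : 0 < Order.min dl1 dl2 by rewrite lt_min dl10 dl20.
  have [t0 t1 tN] := small_t N0 dl0; set t := _ / _ in t0 t1 tN.
  have tN1 : t * N < dl1 by apply: (lt_le_trans tN); rewrite ge_min lexx.
  have tN2 : t * N < dl2 by apply: (lt_le_trans tN); rewrite ge_min lexx orbT.
  have := hdl1 t ltac:(by rewrite t0 t1) tN1.
  have Dt : D (t *: r + (1 - t) *: p) by apply: Dq; rewrite ltW.
  have hcont : forall k, `|(\row_k s (t *: r + (1 - t) *: p) k) 0 k - (\row_k s p k) 0 k| <= eps.
    move=> k; rewrite !mxE; apply: ltW; apply: hdl2 => //.
    by rewrite qtE nrm1Z ?ltW.
  have := sum_bound d hcont.
  under eq_bigr do rewrite mxE. under [X in `|_ - X|]eq_bigr do rewrite mxE.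
  rewrite -/A -/N => hb.
  have := (hps _ _ Dp Dt).1.
  rewrite /Gfun (exp_score_qt s p r (t *: r + (1 - t) *: p) t) -/d.
  move: hb; set C := \sum_k d 0 k * _.
  move=> /ler_normlP [hb1 hb2] hp /ler_normlP [hG _].
  nra.
Qed.

Lemma score_repr (R : realType) n (D : set 'rV[R]_n) (s : 'rV[R]_n -> 'I_n -> R)
  (g : 'rV[R]_n -> 'rV[R]_n) p :
  forecast_domain D -> proper_scoring_rule D s -> continuous_scoring_rule D s ->
  is_gradient_on D (Gfun s) g -> D p ->
  exists c : R, forall k, s p k = g p 0 k + c.
Proof.
move=> fD hps hc hg Dp.
have [_ cD _] := fD.
have hsp : forall r, D r -> dotv (\row_k s p k - g p) (r - p) = 0.
  move=> r Dr.
  rewrite /dotv.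
  have -> : \sum_(j < n) (\row_k s p k - g p) 0 j * (r - p) 0 j =
     \sum_k (r - p) 0 k * s p k - dotv (g p) (r - p).
    rewrite /dotv -sumrB; apply: eq_bigr => k _; rewrite !mxE.
    by rewrite mulrBl mulrC [X in _ - X]mulrC.
  by rewrite (dir_lemma cD hps hc hg Dp Dr) subrr.
have [c hv] := span_lemma fD Dp hsp.
exists c => k; have := congr1 (fun M : 'rV[R]_n => M 0 k) hv; rewrite !mxE /= mulr1.
by move=> <-; rewrite addrCA subrr addr0.
Qed.

Lemma bound_lemma (R : realType) n m (s : 'rV[R]_n -> 'I_n -> R)
  (g : 'rV[R]_n -> 'rV[R]_n) (ps : 'I_m -> 'rV[R]_n) (x : 'rV[R]_m) (p q : 'rV[R]_n) (c c' : R) (j : 'I_n) :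
  (forall k, s p k = g p 0 k + c) ->
  g p = \sum_(i < m) x 0 i *: g (ps i) + c' *: ones n ->
  \sum_k q 0 k = 1 ->
  s p j = \sum_(i < m) x 0 i * (g (ps i) 0 j - dotv q (g (ps i))) + exp_score s q p.
Proof.
move=> hs hg q1.
have he : exp_score s q p = dotv q (g p) + c.
  rewrite /exp_score /dotv.
  under eq_bigr do rewrite hs mulrDr.
  by rewrite big_split /= -mulr_suml q1 mul1r.
rewrite he hs addrA; congr (_ + _).
have -> : dotv q (g p) = \sum_(i < m) x 0 i * dotv q (g (ps i)) + c'.
  rewrite hg /dotv.
  under eq_bigr do rewrite mxE summxE mulrDr.
  rewrite big_split /=; congr (_ + _).
    under eq_bigr do rewrite mulr_sumr.
    rewrite exchange_big /=; apply: eq_bigr => i _; rewrite mulr_sumr.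
    by apply: eq_bigr => k _; rewrite !mxE mulrCA.
  under eq_bigr do rewrite !mxE mulr1 mulrC.
  by rewrite -mulr_sumr q1 mulr1.
rewrite hg mxE summxE !mxE mulr1.
under eq_bigr do rewrite !mxE.
rewrite addrA; congr (_ + _).
rewrite -big_split /=; apply: eq_bigr => i _.
by rewrite -mulrDr subrK.
Qed.

Lemma pool_gen (R : realType) n (D : set 'rV[R]_n) (g : 'rV[R]_n -> 'rV[R]_n) :
  convex_exposure D g -> forall k (x : 'I_k -> R) (q : 'I_k -> 'rV[R]_n),
  (forall i, D (q i)) -> (forall i, 0 <= x i) -> \sum_i x i = 1 ->
  exists r, D r /\ exists c : R, g r = \sum_i x i *: g (q i) + c *: ones n.
Proof.
move=> cE; elim=> [|k IH] x q Dq x0 x1.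
  by move: x1; rewrite big_ord0 => /eqP; rewrite eq_sym oner_eq0.
move: x1; rewrite big_ord_recl => x1.
have tl0 : 0 <= \sum_(i < k) x (lift ord0 i) by apply: sumr_ge0 => i _.
have [h1|h1] := eqVneq (x ord0) 1.
  have tl : \sum_(i < k) x (lift ord0 i) = 0 by move: x1; rewrite h1; lra.
  have := (psumr_eq0P (fun i _ => x0 (lift ord0 i)) tl) => hz.
  exists (q ord0); split => //; exists 0.
  rewrite big_ord_recl h1 scale1r scale0r addr0 big1 ?addr0 // => i _.
  by rewrite hz // scale0r.
set t := 1 - x ord0.
have t0 : 0 < t.
  have : x ord0 <= 1 by lra.
  by rewrite le_eqVlt (negbTE h1) /= /t => ?; lra.
have ht : \sum_(i < k) x (lift ord0 i) = t by rewrite /t; lra.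
have [r' [Dr' [c' hr']]] := IH (fun i => x (lift ord0 i) / t) (fun i => q (lift ord0 i))
   (fun i => Dq _) (fun i => divr_ge0 (x0 _) (ltW t0))
   ltac:(by rewrite -mulr_suml ht divff // gt_eqF).
have x01 : 0 <= x ord0 <= 1 by rewrite x0 /=; lra.
have [r [Dr [c'' hr]]] := cE _ _ (Dq ord0) Dr' _ x01.
exists r; split => //; exists (t * c' + c'').
rewrite hr hr' big_ord_recl -/t scalerDr scaler_sumr.
have -> : \sum_i t *: ((x (lift ord0 i) / t) *: g (q (lift ord0 i))) =
          \sum_i x (lift ord0 i) *: g (q (lift ord0 i)).
  apply: eq_bigr => i _; rewrite scalerA mulrC divfK //; by rewrite gt_eqF.
by rewrite scalerA scalerDl !addrA.
Qed.

Lemma pool_exists (R : realType) n m (D : set 'rV[R]_n) (g : 'rV[R]_n -> 'rV[R]_n)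
  (ps : 'I_m -> 'rV[R]_n) (x : 'rV[R]_m) :
  convex_exposure D g -> (forall i, D (ps i)) -> std_simplex m x ->
  is_qa_pool D g ps x (qa_pool D g ps x).
Proof.
move=> cE Dps [x0 x1]; apply: xgetPex.
have [r [Dr [c hr]]] := pool_gen cE Dps x0 x1.
by exists r; split => //; exists c.
Qed.

Lemma le_integral_upper d (T : measurableType d) (R : realType)
  (mu : {measure set T -> \bar R}) (f h : T -> \bar R) :
  measurable_fun setT f -> mu.-integrable setT h -> (forall x, (f x <= h x)%E) ->
  (\int[mu]_x f x <= \int[mu]_x h x)%E.
Proof.
move=> mf ih fh.
have mh : measurable_fun setT h by exact: measurable_int ih.
rewrite [X in (X <= _)%E]integralE [X in (_ <= X)%E]integralE; apply: leeB.
  apply: ge0_le_integral => //.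
  - exact: measurable_funepos.
  - exact: measurable_funepos.
  - by move=> x _; apply: (funepos_le (D := setT)) => //; rewrite inE.
apply: ge0_le_integral => //.
- exact: measurable_funeneg.
- exact: measurable_funeneg.
- by move=> x _; apply: (funeneg_le (D := setT)) => //; rewrite inE.
Qed.

Lemma simplex_le1 (R : realType) m (x : 'rV[R]_m) i :
  std_simplex m x -> 0 <= x 0 i <= 1.
Proof.
move=> [x0 x1]; rewrite x0 /= -x1 (bigD1 i) //= lerDl.
by apply: sumr_ge0 => k _.
Qed.

Unset Implicit Arguments. Set Strict Implicit.

Theorem corollary5p4 (R : realType) (n m : nat) (D : set 'rV[R]_n)
  (s : 'rV[R]_n -> 'I_n -> R) (g : 'rV[R]_n -> 'rV[R]_n)
  (ps : 'I_m -> 'rV[R]_n)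
  (d : measure_display) (Omega : measurableType d) (P : probability Omega R)
  (w : Omega -> 'rV[R]_m) :
  forecast_domain D ->
  proper_scoring_rule D s ->
  continuous_scoring_rule D s ->
  strictly_convex_on D (Gfun s) ->
  is_gradient_on D (Gfun s) g ->
  convex_exposure D g ->
  (forall i, D (ps i)) ->
  (forall om, std_simplex m (w om)) ->
  (forall i, measurable_fun setT (fun om => w om 0 i)) ->
  let w_hat : 'rV[R]_m := \row_(i < m) Rintegral P setT (fun om => w om 0 i) in
  forall j : 'I_n,
    measurable_fun setT (fun om => s (qa_pool D g ps (w om)) j) ->
    (\int[P]_om (s (qa_pool D g ps (w om)) j)%:E
       <= (s (qa_pool D g ps w_hat) j)%:E)%E.
Proof.
move=> hfD hps hc hsc hg hcE hDps hw hmw w_hat j hmf.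
have [DS cD _] := hfD.
have hint : forall i, P.-integrable setT (EFin \o (fun om => w om 0 i)).
  move=> i; apply: (@le_integrable _ _ _ P setT measurableT _ (EFin \o cst 1)).
  - exact/measurable_EFinP.
  - move=> om _ /=; have := simplex_le1 i (hw om) => /andP [h0 h1].
    by rewrite lee_fin normr1 ger0_norm.
  - exact: finite_measure_integrable_cst.
have hwh : forall i, (w_hat 0 i)%:E = (\int[P]_om (w om 0 i)%:E)%E.
  move=> i; rewrite /w_hat mxE /Rintegral fineK //.
  exact: (integrable_fin_num measurableT (hint i)).
have whS : std_simplex m w_hat.
  split.
    move=> i; rewrite /w_hat mxE; apply: Rintegral_ge0 => om _.
    by have := simplex_le1 i (hw om) => /andP [].
  apply: EFin_inj; rewrite -sumEFin.
  under eq_bigr do rewrite hwh.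
  rewrite -integral_sum //.
  under eq_integral do rewrite sumEFin (proj2 (hw _)).
  by rewrite integral_cst //= probability_setT mul1e.
set ph := qa_pool D g ps w_hat.
have [Dph [ch hph]] := pool_exists hcE hDps whS.
have [_ ph1] := DS _ Dph.
set b := fun i => g (ps i) 0 j - dotv ph (g (ps i)).
have bnd : forall om,
    s (qa_pool D g ps (w om)) j <= \sum_i w om 0 i * b i + Gfun s ph.
  move=> om; have [Dp [c' hp]] := pool_exists hcE hDps (hw om).
  have [c hs] := score_repr hfD hps hc hg Dp.
  rewrite (bound_lemma j hs hp ph1) lerD2l; exact: (hps _ _ Dph Dp).1.
have eqh : s ph j = \sum_i w_hat 0 i * b i + Gfun s ph.
  have [c hs] := score_repr hfD hps hc hg Dph.
  by rewrite (bound_lemma j hs hph ph1).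
rewrite eqh.
have hL : (fun om => (\sum_i w om 0 i * b i + Gfun s ph)%:E) =
    (fun om => (\sum_i (b i)%:E * (EFin \o (fun om => w om 0%R i)) om) + (EFin \o cst (Gfun s ph)) om)%E.
  apply/funext => om; rewrite EFinD -sumEFin; congr (_ + _)%E.
  by apply: eq_bigr => i _; rewrite /= EFinM muleC.
have iL : P.-integrable setT (fun om => (\sum_i w om 0 i * b i + Gfun s ph)%:E).
  rewrite hL; apply: integrableD => //.
    apply: integrable_sum => // i _; exact: integrableZl.
  exact: finite_measure_integrable_cst.
apply: le_trans (le_integral_upper _ iL _) _.
- exact/measurable_EFinP.
- by move=> om; rewrite lee_fin bnd.
rewrite hL integralD //; last exact: finite_measure_integrable_cst.
  rewrite integral_sum //; last by move=> i; exact: integrableZl.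
  have eG : (\int[P]_x (EFin \o cst (Gfun s ph)) x = (Gfun s ph)%:E)%E.
    rewrite (_ : EFin \o cst _ = cst (Gfun s ph)%:E) // integral_cst //.
    by rewrite [X in (_ * X)%E]probability_setT mule1.
  rewrite eG.
  under eq_bigr => i _ do rewrite (integralZl measurableT (hint i)) -hwh -EFinM.
  rewrite sumEFin -EFinD lee_fin.
  by under eq_bigr do rewrite mulrC.
apply: integrable_sum => // i _; exact: integrableZl.
Qed.
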